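(* Let $R>0$ and let $\mathbf L\colon\mathbb R^n\times\mathbb R^m\to\mathbb R$ be an $R$-smooth convex-concave function with a saddle point $\mathbf z^\star$. Let $\alpha_0=\frac{0.618}{R}$, $\alpha_{k+1}=\alpha_k\left(1-\frac{1}{(k+1)(k+3)}\frac{\alpha_k^2R^2}{1-\alpha_k^2R^2}\right)$ for $k\ge0$, let $\mathbf z^0\in\mathbb R^n\times\mathbb R^m$, and define $$\mathbf z^{k+1/2}=\mathbf z^k+\tfrac{1}{k+2}(\mathbf z^0-\mathbf z^k)-\alpha_k\mathbf G(\mathbf z^k),\qquad \mathbf z^{k+1}=\mathbf z^k+\tfrac{1}{k+2}(\mathbf z^0-\mathbf z^k)-\alpha_k\mathbf G(\mathbf z^{k+1/2}),\quad k\ge0.$$ Then for all $k\ge0$, $$\|\nabla\mathbf L(\mathbf z^k)\|^2\le\frac{27R^2\|\mathbf z^0-\mathbf z^\star\|^2}{(k+1)(k+2)}.$$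
   Context: Write $\mathbf z=(\mathbf x,\mathbf y)$. $\mathbf L$ convex-concave: convex in $\mathbf x$ for fixed $\mathbf y$, concave in $\mathbf y$ for fixed $\mathbf x$. A saddle point $(\mathbf x^\star,\mathbf y^\star)$ satisfies $\mathbf L(\mathbf x^\star,\mathbf y)\le\mathbf L(\mathbf x^\star,\mathbf y^\star)\le\mathbf L(\mathbf x,\mathbf y^\star)$ for all $\mathbf x,\mathbf y$. $\mathbf G(\mathbf z)=(\nabla_{\mathbf x}\mathbf L(\mathbf x,\mathbf y),-\nabla_{\mathbf y}\mathbf L(\mathbf x,\mathbf y))$; $\mathbf L$ is $R$-smooth if it is differentiable and $\mathbf G$ is $R$-Lipschitz. *)

(* Defs.v *)
From HB Require Import structures.
From mathcomp Require Import all_boot all_order all_algebra.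
From mathcomp Require Import all_classical all_reals all_analysis.
Set Implicit Arguments. Unset Strict Implicit. Unset Printing Implicit Defensive.
Import Order.TTheory GRing.Theory Num.Theory.
Import numFieldNormedType.Exports.
Local Open Scope ring_scope.

(* Euclidean squared norm on row vectors R^n (the library's norm on 'rV is the max norm). *)
Definition sqnorm (R : realType) (n : nat) (v : 'rV[R]_n) : R :=
  \sum_(i < n) (v ord0 i) ^+ 2.

Definition sqnormz (R : realType) (n m : nat) (z : 'rV[R]_n * 'rV[R]_m) : R :=
  sqnorm z.1 + sqnorm z.2.

Definition grad_x (R : realType) (n m : nat) (L : 'rV[R]_n -> 'rV[R]_m -> R)
  (x : 'rV[R]_n) (y : 'rV[R]_m) : 'rV[R]_n :=
  \row_i 'D_(delta_mx ord0 i) (fun x' => L x' y) x.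

Definition grad_y (R : realType) (n m : nat) (L : 'rV[R]_n -> 'rV[R]_m -> R)
  (x : 'rV[R]_n) (y : 'rV[R]_m) : 'rV[R]_m :=
  \row_i 'D_(delta_mx ord0 i) (fun y' => L x y') y.

Definition gradL (R : realType) (n m : nat) (L : 'rV[R]_n -> 'rV[R]_m -> R)
  (z : 'rV[R]_n * 'rV[R]_m) : 'rV[R]_n * 'rV[R]_m :=
  (grad_x L z.1 z.2, grad_y L z.1 z.2).

Definition Gop (R : realType) (n m : nat) (L : 'rV[R]_n -> 'rV[R]_m -> R)
  (z : 'rV[R]_n * 'rV[R]_m) : 'rV[R]_n * 'rV[R]_m :=
  (grad_x L z.1 z.2, - grad_y L z.1 z.2).

Definition convex_concave (R : realType) (n m : nat)
  (L : 'rV[R]_n -> 'rV[R]_m -> R) : Prop :=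
  (forall (y : 'rV[R]_m) (x1 x2 : 'rV[R]_n) (t : R), 0 <= t <= 1 ->
     L (t *: x1 + (1 - t) *: x2) y <= t * L x1 y + (1 - t) * L x2 y) /\
  (forall (x : 'rV[R]_n) (y1 y2 : 'rV[R]_m) (t : R), 0 <= t <= 1 ->
     t * L x y1 + (1 - t) * L x y2 <= L x (t *: y1 + (1 - t) *: y2)).

Definition smooth_R (R : realType) (n m : nat) (Rc : R)
  (L : 'rV[R]_n -> 'rV[R]_m -> R) : Prop :=
  (forall z : 'rV[R]_n * 'rV[R]_m,
     differentiable (fun w : 'rV[R]_n * 'rV[R]_m => L w.1 w.2) z) /\
  (forall z w : 'rV[R]_n * 'rV[R]_m,
     Num.sqrt (sqnormz (Gop L z - Gop L w)) <= Rc * Num.sqrt (sqnormz (z - w))).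

Definition saddle_point (R : realType) (n m : nat)
  (L : 'rV[R]_n -> 'rV[R]_m -> R) (xs : 'rV[R]_n) (ys : 'rV[R]_m) : Prop :=
  forall (x : 'rV[R]_n) (y : 'rV[R]_m), L xs y <= L xs ys /\ L xs ys <= L x ys.

Fixpoint alpha (R : realType) (Rc : R) (k : nat) : R :=
  match k with
  | 0%N => (618%:R / 1000%:R) / Rc
  | k'.+1 => let a := alpha Rc k' in
      a * (1 - (1 / ((k'.+1)%:R * (k'.+3)%:R)) *
               ((a ^+ 2 * Rc ^+ 2) / (1 - a ^+ 2 * Rc ^+ 2)))
  end.

Definition half_step (R : realType) (n m : nat) (L : 'rV[R]_n -> 'rV[R]_m -> R)
  (Rc : R) (z0 zk : 'rV[R]_n * 'rV[R]_m) (k : nat) : 'rV[R]_n * 'rV[R]_m :=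
  zk + (k.+2%:R)^-1 *: (z0 - zk) - alpha Rc k *: Gop L zk.

Fixpoint iter_z (R : realType) (n m : nat) (L : 'rV[R]_n -> 'rV[R]_m -> R)
  (Rc : R) (z0 : 'rV[R]_n * 'rV[R]_m) (k : nat) : 'rV[R]_n * 'rV[R]_m :=
  match k with
  | 0%N => z0
  | k'.+1 => let zk := iter_z L Rc z0 k' in
      zk + (k'.+2%:R)^-1 *: (z0 - zk) - alpha Rc k' *: Gop L (half_step L Rc z0 zk k')
  end.

(* Main.v *)
Require Import Defs.
From HB Require Import structures.
From mathcomp Require Import all_boot all_order all_algebra.
From mathcomp Require Import all_classical all_reals all_analysis.
From mathcomp Require Import ring lra.
Import Order.TTheory GRing.Theory Num.Theory.
Import numFieldNormedType.Exports.
Local Open Scope ring_scope.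

Section RealLemmas1.
Context {R : realType}.

Lemma lyap_real (a Rc N uu ue uh hh ww wh we : R) :
 0 < a -> 0 < Rc -> a * Rc < 1 -> 1 <= N ->
 let r := a ^+ 2 * Rc ^+ 2 in
 let ap := a * (1 - 1 / (N * (N + 2)) * (r / (1 - r))) in
 let be := (N + 1)^-1 in
 let s := 1 / r - 1 in
 let d := (N + 1) / N - 1 / r in
 0 <= - be * we - a * wh + be * ue + a * uh ->
 ww - 2 * wh + hh <= r * (uu - 2 * uh + hh) ->
 0 <= s ^+ 2 * hh + 2 * s * d * wh + d ^+ 2 * ww ->
 ap * (N + 1) * (N + 2) / 2 * ww + (N + 1) * ((1 - be) * we - a * wh)
   <= a * N * (N + 1) / 2 * uu + N * ue.
Proof.
move=> a0 R0 aR1 N1 r ap be s d HM HL HS.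
have r0 : 0 < r by rewrite /r mulr_gt0 // exprn_gt0.
have r1 : r < 1.
  rewrite /r -exprMn expr2; have : 0 < a * Rc by rewrite mulr_gt0.
  move=> h; rewrite -[1](mulr1 1); apply: (@le_lt_trans _ _ (a * Rc * 1)).
    by rewrite ler_pM2l // ltW.
  by rewrite ltr_pM2r.
have N0 : 0 < N by lra.
have s0 : 0 < s.
  by rewrite /s subr_gt0 mul1r invf_gt1.
rewrite -subr_ge0.
have -> : a * N * (N + 1) / 2 * uu + N * ue -
  (ap * (N + 1) * (N + 2) / 2 * ww + (N + 1) * ((1 - be) * we - a * wh)) =
  N * (N + 1) * (- be * we - a * wh + be * ue + a * uh) +
  a * N * (N + 1) * ((1 / (2 * r)) * (r * (uu - 2 * uh + hh) - (ww - 2 * wh + hh))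
     + (s ^+ 2 * hh + 2 * s * d * wh + d ^+ 2 * ww) / (2 * s)).
  rewrite /ap /be /s /d. field.
  by apply/and5P; split; rewrite gt_eqF //; lra.
apply: addr_ge0; first by apply: mulr_ge0 => //; apply: mulr_ge0; lra.
apply: mulr_ge0; first by apply: mulr_ge0; [apply: mulr_ge0|]; lra.
apply: addr_ge0.
  apply: mulr_ge0; first by rewrite mul1r invr_ge0; lra.
  by rewrite subr_ge0.
by apply: divr_ge0 => //; lra.
Qed.
End RealLemmas1.

Section RealLemmas2.
Context {R : realType}.

Lemma final_real (a Rc N gg gs DD : R) : 0 < Rc -> 0 < a ->
 217%:R / 500%:R <= a * Rc -> 1 <= N -> 0 <= DD ->
 a * N * (N + 1) / 2 * gg + N * gs <= 618%:R / 1000%:R * Rc * DD ->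
 0 <= (a * N * (N + 1) / 2) ^+ 2 * gg + 2 * (a * N * (N + 1) / 2) * N * gs + N ^+ 2 * DD ->
 gg <= 27%:R * Rc ^+ 2 * DD / (N * (N + 1)).
Proof.
move=> R0 a0 hb N1 D0 HV HY.
set c : R := 618%:R / 1000%:R.
set P := N * (N + 1).
set A := a * N * (N + 1) / 2.
pose b := a * Rc.
have hbb : 217%:R / 500%:R <= b by exact: hb.
have P0 : 0 < P by rewrite /P; apply: mulr_gt0; lra.
have A0 : 0 < A by rewrite /A; apply: divr_gt0; [apply: mulr_gt0; [apply: mulr_gt0|]|]; lra.
have NP : N ^+ 2 <= P by rewrite /P expr2 ler_pM2l; lra.
have H1 : A ^+ 2 * gg <= 2 * A * (c * Rc * DD) + P * DD.
  have h2 : 2 * A * (A * gg + N * gs) <= 2 * A * (c * Rc * DD).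
    by apply: ler_wpM2l; [apply: mulr_ge0; lra|].
  have h1 : N ^+ 2 * DD <= P * DD by rewrite ler_wpM2r.
  move: h1 h2 HY; rewrite -/A. clearbody A P c. move=> h1 h2 HY. nra.
have key : c * b + 1 <= 27%:R / 4%:R * b ^+ 2.
  rewrite /c. have hb0 : 0 <= (b - 217%:R / 500%:R) ^+ 2 by exact: sqr_ge0.
  move: hbb hb0; clearbody b. move=> hbb hb0. lra.
have AE : A = a * P / 2 by rewrite /A /P; ring.
rewrite ler_pdivlMr //.
rewrite -(@ler_pM2l _ (A ^+ 2)) ?exprn_gt0 //.
apply: (@le_trans _ _ (P * (2 * A * (c * Rc * DD) + P * DD))).
  have -> : A ^+ 2 * (gg * P) = P * (A ^+ 2 * gg) by ring.
  apply: ler_wpM2l; [exact: ltW | exact: H1].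
have E1 : P * (2 * A * (c * Rc * DD) + P * DD) = DD * (P ^+ 2 * (c * b + 1)).
  by rewrite AE /b; field.
have E2 : A ^+ 2 * (27%:R * Rc ^+ 2 * DD) = DD * (P ^+ 2 * (27%:R / 4%:R * b ^+ 2)).
  by rewrite AE /b; field.
rewrite E1 E2; apply: ler_wpM2l => //; apply: ler_wpM2l => //.
exact: sqr_ge0.
Qed.
End RealLemmas2.

Section Bseq.
Context {R : realType}.

Definition nxt (c b : R) := b * (1 - 1 / c * (b ^+ 2 / (1 - b ^+ 2))).

Lemma nxtE (c b : R) : 0 < c -> b ^+ 2 < 1 -> nxt c b = b - b ^+ 3 / (c * (1 - b ^+ 2)).
Proof.
move=> c0 b1; rewrite /nxt; field.
apply/andP; split; rewrite gt_eqF //; lra.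
Qed.

Lemma bstep (b c L U L' U' : R) : 0 < L -> L <= b -> b <= U -> U < 1 -> 0 < c ->
 U ^+ 3 <= (L - L') * c * (1 - U ^+ 2) -> (U - U') * c * (1 - L ^+ 2) <= L ^+ 3 -> U' <= U ->
 L' <= nxt c b <= U'.
Proof.
move=> L0 Lb bU U1 c0 h1 h2 UU.
have b0 : 0 <= b by lra.
have bsq : b ^+ 2 <= U ^+ 2 by apply: lerXn2r => //; rewrite nnegrE; lra.
have Lsq : L ^+ 2 <= b ^+ 2 by apply: lerXn2r => //; rewrite nnegrE; lra.
have Usq : U ^+ 2 < 1 by rewrite expr2; nra.
have b1 : b ^+ 2 < 1 by lra.
have bcu : b ^+ 3 <= U ^+ 3 by apply: lerXn2r => //; rewrite nnegrE; lra.
have bcl : L ^+ 3 <= b ^+ 3 by apply: lerXn2r => //; rewrite nnegrE; lra.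
have d0 : 0 < c * (1 - b ^+ 2) by apply: mulr_gt0; lra.
rewrite nxtE //; apply/andP; split.
- have LL : 0 <= L - L'.
    have : 0 <= U ^+ 3 by apply: exprn_ge0; lra.
    move=> u3; have cu : 0 < c * (1 - U ^+ 2) by apply: mulr_gt0; lra.
    rewrite -mulrA in h1.
    have := le_trans u3 h1; rewrite pmulr_lge0 //.
  have hq : b ^+ 3 / (c * (1 - b ^+ 2)) <= L - L'.
    rewrite ler_pdivrMr //.
    apply: (le_trans bcu); apply: (le_trans h1); rewrite -mulrA.
    by apply: ler_wpM2l => //; apply: ler_wpM2l; lra.
  lra.
- have hq : U - U' <= b ^+ 3 / (c * (1 - b ^+ 2)).
    rewrite ler_pdivlMr //.
    apply: le_trans bcl; apply: le_trans h2; rewrite -mulrA.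
    by apply: ler_wpM2l => //; [lra | apply: ler_wpM2l; lra].
  lra.
Qed.

Lemma tail_step (b c U Phi : R) : 0 < b -> b <= U -> U < 1 -> 0 < c ->
  U ^+ 3 <= Phi * (1 - U ^+ 2) -> b - Phi / c <= nxt c b <= b.
Proof.
move=> b0 bU U1 c0 hP.
have Usq : U ^+ 2 < 1 by rewrite expr2; nra.
have bsq : b ^+ 2 <= U ^+ 2 by apply: lerXn2r => //; rewrite nnegrE; lra.
have b1 : b ^+ 2 < 1 by lra.
have bcu : b ^+ 3 <= U ^+ 3 by apply: lerXn2r => //; rewrite nnegrE; lra.
have P0 : 0 <= Phi.
  have u3 : 0 <= U ^+ 3 by apply: exprn_ge0; lra.
  have := le_trans u3 hP; rewrite pmulr_lge0 //; lra.
have d0 : 0 < c * (1 - b ^+ 2) by apply: mulr_gt0; lra.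
have q0 : 0 <= b ^+ 3 / (c * (1 - b ^+ 2)).
  by apply: divr_ge0; [apply: exprn_ge0; lra | lra].
have hq : b ^+ 3 / (c * (1 - b ^+ 2)) <= Phi / c.
  rewrite ler_pdivrMr // mulrA divfK ?gt_eqF //.
  apply: (le_trans bcu); apply: (le_trans hP); apply: ler_wpM2l => //; lra.
rewrite nxtE //; lra.
Qed.

Definition bseq (Rc : R) k := alpha Rc k * Rc.

Lemma bseq0 (Rc : R) : 0 < Rc -> bseq Rc 0 = 618%:R / 1000%:R.
Proof. by move=> R0; rewrite /bseq /= divfK // gt_eqF. Qed.

Lemma bseqS (Rc : R) k : bseq Rc k.+1 = nxt ((k.+1)%:R * (k.+3)%:R) (bseq Rc k).
Proof. rewrite /bseq /nxt /= exprMn; ring. Qed.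

Definition Tk (k : nat) : R := 2^-1 * ((k%:R + 1)^-1 + (k%:R + 2)^-1).

Lemma Tk_step k : Tk k - Tk k.+1 = 1 / ((k.+1)%:R * (k.+3)%:R).
Proof.
rewrite /Tk -!natr1. have := ler0n R k => k0.
field. by apply/and3P; split; rewrite gt_eqF //; lra.
Qed.

Lemma Tk_ge0 k : 0 <= Tk k.
Proof.
rewrite /Tk; apply: mulr_ge0; first by rewrite invr_ge0; lra.
by apply: addr_ge0; rewrite invr_ge0; have := ler0n R k; lra.
Qed.

Lemma bstep1 (b : R) : 618%:R / 1000%:R <= b <= 618%:R / 1000%:R ->
  2453%:R / 5000%:R <= nxt (1%:R * 3%:R) b <= 2454%:R / 5000%:R.
Proof.
move=> /andP [l u]; apply: (@bstep b _ (618%:R / 1000%:R) (618%:R / 1000%:R) _ _ _ l u); lra.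
Qed.

Lemma bstep2 (b : R) : 2453%:R / 5000%:R <= b <= 2454%:R / 5000%:R ->
  2355%:R / 5000%:R <= nxt (2%:R * 4%:R) b <= 2357%:R / 5000%:R.
Proof.
move=> /andP [l u]; apply: (@bstep b _ (2453%:R / 5000%:R) (2454%:R / 5000%:R) _ _ _ l u); lra.
Qed.

Lemma bstep3 (b : R) : 2355%:R / 5000%:R <= b <= 2357%:R / 5000%:R ->
  2310%:R / 5000%:R <= nxt (3%:R * 5%:R) b <= 2313%:R / 5000%:R.
Proof.
move=> /andP [l u]; apply: (@bstep b _ (2355%:R / 5000%:R) (2357%:R / 5000%:R) _ _ _ l u); lra.
Qed.

Lemma bstep4 (b : R) : 2310%:R / 5000%:R <= b <= 2313%:R / 5000%:R ->
  2283%:R / 5000%:R <= nxt (4%:R * 6%:R) b <= 2287%:R / 5000%:R.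
Proof.
move=> /andP [l u]; apply: (@bstep b _ (2310%:R / 5000%:R) (2313%:R / 5000%:R) _ _ _ l u); lra.
Qed.

Lemma bstep5 (b : R) : 2283%:R / 5000%:R <= b <= 2287%:R / 5000%:R ->
  2265%:R / 5000%:R <= nxt (5%:R * 7%:R) b <= 2270%:R / 5000%:R.
Proof.
move=> /andP [l u]; apply: (@bstep b _ (2283%:R / 5000%:R) (2287%:R / 5000%:R) _ _ _ l u); lra.
Qed.

End Bseq.

Section B2.
Context {R : realType}.
Lemma num_tail : 217%:R / 500%:R <= 2265%:R / 5000%:R - 118%:R / 1000%:R * (2^-1 * (6%:R^-1 + 7%:R^-1)) :> R.
Proof. lra. Qed.
Lemma num_U1 : 2270%:R / 5000%:R < 1 :> R. Proof. lra. Qed.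
Lemma num_Ucond : (2270%:R / 5000%:R) ^+ 3 <= 118%:R / 1000%:R * (1 - (2270%:R / 5000%:R) ^+ 2) :> R.
Proof. lra. Qed.
Lemma num_Phi : 0 <= 118%:R / 1000%:R :> R. Proof. lra. Qed.
Lemma num_pos : 0 < 217%:R / 500%:R :> R. Proof. lra. Qed.

Lemma Tk5_le : (Tk 5 : R) <= 2^-1 * (6%:R^-1 + 7%:R^-1).
Proof.
rewrite /Tk. have -> : (5%:R + 1 : R) = 6%:R by rewrite natr1.
by have -> : (5%:R + 2 : R) = 7%:R by rewrite -natrD.
Qed.

Lemma tail_inv (Rc : R) :
  2265%:R / 5000%:R <= bseq Rc 5 <= 2270%:R / 5000%:R ->
  forall j, bseq Rc (j + 5) <= 2270%:R / 5000%:R /\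
   2265%:R / 5000%:R - 118%:R / 1000%:R * (Tk 5 - Tk (j + 5)) <= bseq Rc (j + 5).
Proof.
move=> b5.
have hT : (Tk 5 : R) <= 2^-1 * (6%:R^-1 + 7%:R^-1).
  rewrite /Tk. have -> : (5%:R + 1 : R) = 6%:R by rewrite natr1.
  by have -> : (5%:R + 2 : R) = 7%:R by rewrite -natrD.
elim=> [|j [IHu IHl]].
  move/andP: b5 => [l u]; split => //; by rewrite subrr mulr0 subr0.
have T0 : 0 <= Tk (j + 5) :> R by exact: Tk_ge0.
have bpos : 217%:R / 500%:R <= bseq Rc (j + 5).
  apply: (le_trans _ IHl); apply: (le_trans num_tail).
  rewrite lerD2l lerN2; apply: ler_wpM2l; first exact: num_Phi.
  move: hT T0; move: (Tk 5) (Tk (j + 5)) => x y h1 h2; lra.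
have c0 : 0 < ((j + 5).+1%:R * (j + 5).+3%:R : R) by apply: mulr_gt0; rewrite ltr0n.
have b0 : 0 < bseq Rc (j + 5) by apply: lt_le_trans bpos; exact: num_pos.
have := @tail_step _ _ _ _ _ b0 IHu num_U1 c0 num_Ucond.
rewrite -bseqS => /andP [hl hu]; rewrite addSn; split; first exact: le_trans hu IHu.
have e : Tk (j + 5) - Tk (j + 5).+1 = 1 / ((j + 5).+1%:R * (j + 5).+3%:R) :> R by exact: Tk_step.
have -> : Tk 5 - Tk (j + 5).+1 = Tk 5 - Tk (j + 5) + 1 / ((j + 5).+1%:R * (j + 5).+3%:R) :> R.
  by rewrite -e; ring.
move: hl IHl; move: (Tk 5 - Tk (j + 5) : R) (bseq Rc (j + 5)) (bseq Rc (j + 5).+1) => t x y hl IHl.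
move: ((j + 5).+1%:R * (j + 5).+3%:R : R) hl => c hl.
clear -hl IHl. lra.
Qed.

Lemma bseq_bounds (Rc : R) : 0 < Rc -> forall k,
  217%:R / 500%:R <= bseq Rc k <= 618%:R / 1000%:R.
Proof.
move=> R0.
have b0 := bseq0 Rc R0.
have b1 : 2453%:R / 5000%:R <= bseq Rc 1 <= 2454%:R / 5000%:R.
  by rewrite bseqS b0; apply: bstep1; rewrite lexx.
have b2 := bstep2 _ b1; rewrite -bseqS in b2.
have b3 := bstep3 _ b2; rewrite -bseqS in b3.
have b4 := bstep4 _ b3; rewrite -bseqS in b4.
have b5 := bstep5 _ b4; rewrite -bseqS in b5.
have tl := tail_inv Rc b5.
case=> [|[|[|[|[|k]]]]].
- by rewrite b0; apply/andP; split; clear; lra.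
- by move/andP: b1 => [l u]; move: l u; move: (bseq Rc 1) => x l u; clear -l u; apply/andP; split; lra.
- by move/andP: b2 => [l u]; move: l u; move: (bseq Rc 2) => x l u; clear -l u; apply/andP; split; lra.
- by move/andP: b3 => [l u]; move: l u; move: (bseq Rc 3) => x l u; clear -l u; apply/andP; split; lra.
- by move/andP: b4 => [l u]; move: l u; move: (bseq Rc 4) => x l u; clear -l u; apply/andP; split; lra.
have -> : k.+4.+1 = (k + 5)%N by rewrite addnC.
have [u l] := tl k.
have T0 : 0 <= Tk (k + 5) :> R by exact: Tk_ge0.
have hT := Tk5_le.
have nt : 217%:R / 500%:R <= 2265%:R / 5000%:R - 118%:R / 1000%:R * (2^-1 * (6%:R^-1 + 7%:R^-1)) :> R by exact: num_tail.
move: u l T0 hT nt; move: (bseq Rc (k + 5)) (@Tk R 5) (@Tk R (k + 5)) => x t5 t u l T0 hT nt.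
clear -u l T0 hT nt. apply/andP; split; lra.
Qed.

End B2.

Section Dot.
Context {R : realType}.

Definition dotr {k} (p q : 'rV[R]_k) : R := \sum_(i < k) p ord0 i * q ord0 i.

Lemma dotrC k (p q : 'rV[R]_k) : dotr p q = dotr q p.
Proof. by apply: eq_bigr => i _; rewrite mulrC. Qed.
Lemma dotrDl k (p q r : 'rV[R]_k) : dotr (p + q) r = dotr p r + dotr q r.
Proof. by rewrite /dotr -big_split; apply: eq_bigr => i _; rewrite mxE mulrDl. Qed.
Lemma dotrZl k a (p q : 'rV[R]_k) : dotr (a *: p) q = a * dotr p q.
Proof. by rewrite /dotr mulr_sumr; apply: eq_bigr => i _; rewrite mxE mulrA. Qed.
Lemma dotrNl k (p q : 'rV[R]_k) : dotr (- p) q = - dotr p q.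
Proof. by rewrite /dotr -sumrN; apply: eq_bigr => i _; rewrite mxE mulNr. Qed.
Lemma dotrDr k (p q r : 'rV[R]_k) : dotr r (p + q) = dotr r p + dotr r q.
Proof. by rewrite dotrC dotrDl !(dotrC _ r). Qed.
Lemma dotrZr k a (p q : 'rV[R]_k) : dotr q (a *: p) = a * dotr q p.
Proof. by rewrite dotrC dotrZl dotrC. Qed.
Lemma dotrNr k (p q : 'rV[R]_k) : dotr q (- p) = - dotr q p.
Proof. by rewrite dotrC dotrNl dotrC. Qed.
Lemma sqnormE k (p : 'rV[R]_k) : sqnorm p = dotr p p.
Proof. by apply: eq_bigr => i _; rewrite expr2. Qed.

Context {n m : nat}.
Local Notation Z := ('rV[R]_n * 'rV[R]_m)%type.

Definition dotz (u v : Z) : R := dotr u.1 v.1 + dotr u.2 v.2.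

Lemma dotzC (u v : Z) : dotz u v = dotz v u.
Proof. by rewrite /dotz dotrC (dotrC _ u.2). Qed.
Lemma dotzDl (u v w : Z) : dotz (u + v) w = dotz u w + dotz v w.
Proof. rewrite /dotz /= !dotrDl; ring. Qed.
Lemma dotzZl a (u w : Z) : dotz (a *: u) w = a * dotz u w.
Proof. rewrite /dotz /= !dotrZl; ring. Qed.
Lemma dotzNl (u w : Z) : dotz (- u) w = - dotz u w.
Proof. rewrite /dotz /= !dotrNl; ring. Qed.
Lemma dotzDr (u v w : Z) : dotz w (u + v) = dotz w u + dotz w v.
Proof. by rewrite dotzC dotzDl !(dotzC w). Qed.
Lemma dotzZr a (u w : Z) : dotz w (a *: u) = a * dotz w u.
Proof. by rewrite dotzC dotzZl dotzC. Qed.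
Lemma dotzNr (u w : Z) : dotz w (- u) = - dotz w u.
Proof. by rewrite dotzC dotzNl dotzC. Qed.
Lemma sqnormzE (u : Z) : sqnormz u = dotz u u.
Proof. by rewrite /sqnormz /dotz !sqnormE. Qed.
Lemma dotz_ge0 (u : Z) : 0 <= dotz u u.
Proof.
rewrite /dotz; apply: addr_ge0; apply: sumr_ge0 => i _; rewrite -expr2; exact: sqr_ge0.
Qed.
End Dot.

Section Dlemmas.
Context {R : realType} {V : normedModType R}.
Local Open Scope classical_set_scope.

Lemma right_sub_dnbhs (P : set R) : (\forall h \near 0^', P h) -> \forall h \near 0^'+, P h.
Proof.
move=> H; move: H; rewrite /dnbhs !near_withinE; apply: filterS => y Py y0; apply: Py; by rewrite gt_eqF.
Qed.

Lemma D_right (f : V -> R) x v : derivable f x v ->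
  (fun h => h^-1 *: ((f \o shift x) (h *: v) - f x)) @ 0^'+ --> 'D_v f x.
Proof. move=> dv; apply: cvg_trans; last exact: dv. move=> P; exact: right_sub_dnbhs. Qed.

Lemma D_le (f : V -> R) x v c : derivable f x v ->
  (forall h, 0 < h < 1 -> f (h *: v + x) - f x <= h * c) -> 'D_v f x <= c.
Proof.
move=> dv hb; have H := D_right _ _ _ dv; apply: (cvgr_to_le H).
near=> h.
have h0 : 0 < h by near: h; exact: nbhs_right_gt.
have h1 : h < 1 by near: h; exact: nbhs_right_lt.
rewrite /= -[c](mulKf (lt0r_neq0 h0)).
rewrite ler_pM2l ?invr_gt0 //; apply: hb; by rewrite h0 h1.
Unshelve. all: by end_near.
Qed.

Lemma D_ge (f : V -> R) x v c : derivable f x v ->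
  (forall h, 0 < h < 1 -> h * c <= f (h *: v + x) - f x) -> c <= 'D_v f x.
Proof.
move=> dv hb; have H := D_right _ _ _ dv; apply: (cvgr_to_ge H).
near=> h.
have h0 : 0 < h by near: h; exact: nbhs_right_gt.
have h1 : h < 1 by near: h; exact: nbhs_right_lt.
rewrite /= -[c](mulKf (lt0r_neq0 h0)).
rewrite ler_pM2l ?invr_gt0 //; apply: hb; by rewrite h0 h1.
Unshelve. all: by end_near.
Qed.
End Dlemmas.

Section Grad.
Context {R : realType} {n m : nat} (L : 'rV[R]_n -> 'rV[R]_m -> R).
Local Notation Z := ('rV[R]_n * 'rV[R]_m)%type.
Let F := fun w : Z => L w.1 w.2.
Hypothesis diffF : forall z : Z, differentiable F z.

Lemma quot_x (x v : 'rV[R]_n) (y : 'rV[R]_m) :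
  (fun h : R => h^-1 *: (((fun x' => L x' y) \o shift x) (h *: v) - L x y)) =
  (fun h : R => h^-1 *: ((F \o shift (x, y)) (h *: ((v, 0) : Z)) - F (x, y))).
Proof. by apply/funext => h /=; rewrite /F /= scaler0 add0r. Qed.

Lemma quot_y (x : 'rV[R]_n) (y v : 'rV[R]_m) :
  (fun h : R => h^-1 *: (((fun y' => L x y') \o shift y) (h *: v) - L x y)) =
  (fun h : R => h^-1 *: ((F \o shift (x, y)) (h *: ((0, v) : Z)) - F (x, y))).
Proof. by apply/funext => h /=; rewrite /F /= scaler0 add0r. Qed.

Lemma Dx_eq x v y : 'D_v (fun x' => L x' y) x = 'd F (x, y) ((v, 0) : Z).
Proof. by rewrite /derive quot_x -deriveE. Qed.

Lemma Dy_eq x y v : 'D_v (fun y' => L x y') y = 'd F (x, y) ((0, v) : Z).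
Proof. by rewrite /derive quot_y -deriveE. Qed.

Lemma derivable_x x v y : derivable (fun x' => L x' y) x v.
Proof. by rewrite /derivable quot_x; exact: diff_derivable. Qed.

Lemma derivable_y x y v : derivable (fun y' => L x y') y v.
Proof. by rewrite /derivable quot_y; exact: diff_derivable. Qed.

Lemma sum_pair (I : Type) (r : seq I) (P : pred I) (f : I -> 'rV[R]_n) (g : I -> 'rV[R]_m) :
  \sum_(i <- r | P i) ((f i, g i) : Z) = (\sum_(i <- r | P i) f i, \sum_(i <- r | P i) g i).
Proof.
elim: r => [|a r IH]; first by rewrite !big_nil.
by rewrite !big_cons; case: (P a) => //; rewrite IH.
Qed.

Lemma gradx_dot x y v : dotr (grad_x L x y) v = 'D_v (fun x' => L x' y) x.
Proof.
rewrite Dx_eq /dotr.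
have ev : ((v, 0) : Z) = \sum_(i < n) v 0 i *: ((delta_mx 0 i, 0) : Z).
  rewrite sum_pair /=; congr pair; first exact: row_sum_delta.
  by rewrite big1 // => i _; rewrite scaler0.
rewrite ev linear_sum; apply: eq_bigr => i _.
by rewrite linearZ /= mxE Dx_eq mulrC.
Qed.

Lemma grady_dot x y v : dotr (grad_y L x y) v = 'D_v (fun y' => L x y') y.
Proof.
rewrite Dy_eq /dotr.
have ev : ((0, v) : Z) = \sum_(i < m) v 0 i *: ((0, delta_mx 0 i) : Z).
  rewrite sum_pair /=; congr pair; last exact: row_sum_delta.
  by rewrite big1 // => i _; rewrite scaler0.
rewrite ev linear_sum; apply: eq_bigr => i _.
by rewrite linearZ /= mxE Dy_eq mulrC.
Qed.


Lemma vec_conv k (h : R) (d x : 'rV[R]_k) : h *: (d + x) + (1 - h) *: x = h *: d + x.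
Proof. by apply/rowP => i; rewrite !mxE; ring. Qed.

Hypothesis conv : convex_concave L.

Lemma gradx_le x y d : dotr (grad_x L x y) d <= L (d + x) y - L x y.
Proof.
rewrite gradx_dot; apply: D_le; first exact: derivable_x.
move=> h /andP [h0 h1].
have := conv.1 y (d + x) x h; rewrite vec_conv => H.
have {}H := H ltac:(apply/andP; split; lra).
lra.
Qed.

Lemma grady_ge x y d : L x (d + y) - L x y <= dotr (grad_y L x y) d.
Proof.
rewrite grady_dot; apply: D_ge; first exact: derivable_y.
move=> h /andP [h0 h1].
have := conv.2 x (d + y) y h; rewrite vec_conv => H.
have {}H := H ltac:(apply/andP; split; lra).
lra.
Qed.

Lemma mono (z w : Z) : 0 <= dotz (Gop L z - Gop L w) (z - w).
Proof.
case: z => x y; case: w => x' y'.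
have h1 := gradx_le x y (x' - x); rewrite subrK in h1.
have h2 := grady_ge x y (y' - y); rewrite subrK in h2.
have h3 := gradx_le x' y' (x - x'); rewrite subrK in h3.
have h4 := grady_ge x' y' (y - y'); rewrite subrK in h4.
rewrite /dotz /Gop /=.
rewrite !(dotrDl, dotrNl, dotrDr, dotrNr) in h1 h2 h3 h4 *.
lra.
Qed.

Variables (xs : 'rV[R]_n) (ys : 'rV[R]_m).
Hypothesis sad : saddle_point L xs ys.

Lemma gradx_star d : dotr (grad_x L xs ys) d = 0.
Proof.
have H : forall d, 0 <= dotr (grad_x L xs ys) d.
  move=> e; rewrite gradx_dot; apply: D_ge; first exact: derivable_x.
  by move=> h _; rewrite mulr0 subr_ge0; exact: (sad _ _).2.
apply/eqP; rewrite eq_le H andbT; have := H (- d); by rewrite dotrNr oppr_ge0.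
Qed.

Lemma grady_star d : dotr (grad_y L xs ys) d = 0.
Proof.
have H : forall d, dotr (grad_y L xs ys) d <= 0.
  move=> e; rewrite grady_dot; apply: D_le; first exact: derivable_y.
  by move=> h _; rewrite mulr0 subr_le0; exact: (sad _ _).1.
apply/eqP; rewrite eq_le H /=; have := H (- d); by rewrite dotrNr oppr_le0.
Qed.

Lemma Gstar (v : Z) : dotz (Gop L (xs, ys)) v = 0.
Proof. by rewrite /dotz /Gop /= dotrNl gradx_star grady_star oppr0 addr0. Qed.

End Grad.

Section Core.
Context {R : realType} {n m : nat}.
Local Notation Z := ('rV[R]_n * 'rV[R]_m)%type.

Lemma vecZ (p q : Z) : p.1 = q.1 -> p.2 = q.2 -> p = q.
Proof. by case: p q => ? ? [? ?] /= -> ->. Qed.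

Lemma step_core (Rc a ap be N N2 N3 : R) (zk z0 zh z1 u h w : Z) :
  0 < a -> 0 < Rc -> a * Rc < 1 -> 1 <= N -> N2 = N + 1 -> N3 = N + 2 -> be = N2^-1 ->
  ap = a * (1 - 1 / (N * N3) * (a ^+ 2 * Rc ^+ 2 / (1 - a ^+ 2 * Rc ^+ 2))) ->
  zh = zk + be *: (z0 - zk) - a *: u ->
  z1 = zk + be *: (z0 - zk) - a *: h ->
  0 <= dotz (w - u) (z1 - zk) ->
  dotz (w - h) (w - h) <= Rc ^+ 2 * dotz (z1 - zh) (z1 - zh) ->
  ap * N2 * N3 / 2 * dotz w w + N2 * dotz w (z1 - z0) <=
    a * N * N2 / 2 * dotz u u + N * dotz u (zk - z0).
Proof.
move=> a0 R0 aR N1 e2 e3 ebe eap ezh ez1 HM HL.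
set e := zk - z0.
have I1 : z1 - zk = (- be) *: e + (- a) *: h.
  rewrite ez1 /e; apply: vecZ; apply/rowP => i; rewrite !mxE; ring.
have I2 : z1 - zh = a *: u + (- a) *: h.
  rewrite ez1 ezh; apply: vecZ; apply/rowP => i; rewrite !mxE; ring.
have I3 : z1 - z0 = (1 - be) *: e + (- a) *: h.
  rewrite ez1 /e; apply: vecZ; apply/rowP => i; rewrite !mxE; ring.
rewrite I1 in HM; rewrite I2 in HL; rewrite I3.
set r := a ^+ 2 * Rc ^+ 2.
set s := 1 / r - 1.
set d := (N + 1) / N - 1 / r.
have HS := dotz_ge0 (s *: h + d *: w).
rewrite !(dotzDl, dotzDr, dotzZl, dotzZr, dotzNl, dotzNr) in HM HL HS *.
rewrite ?(dotzC h w) ?(dotzC e w) ?(dotzC e u) ?(dotzC h u) ?(dotzC e h) in HM HL HS *.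
have H := @lyap_real R a Rc N (dotz u u) (dotz u zk - dotz u z0) (dotz u h) (dotz h h)
  (dotz w w) (dotz w h) (dotz w zk - dotz w z0) a0 R0 aR N1.
rewrite /= -/r -/s -/d in H.
subst N2 N3 be ap; rewrite -/r.
have hM : 0 <= - (N + 1)^-1 * (dotz w zk - dotz w z0) - a * dotz w h +
   (N + 1)^-1 * (dotz u zk - dotz u z0) + a * dotz u h by lra.
have hL : dotz w w - 2 * dotz w h + dotz h h <= r * (dotz u u - 2 * dotz u h + dotz h h).
  rewrite /r; lra.
have hS : 0 <= s ^+ 2 * dotz h h + 2 * s * d * dotz w h + d ^+ 2 * dotz w w by lra.
have := H hM hL hS.
lra.
Qed.

End Core.

Lemma dotz0r (R : realType) n m (u : ('rV[R]_n * 'rV[R]_m)%type) : dotz u 0 = 0.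
Proof. by rewrite -(scale0r (0 : ('rV[R]_n * 'rV[R]_m)%type)) dotzZr mul0r. Qed.

Lemma sqnormN (R : realType) k (p : 'rV[R]_k) : sqnorm (- p) = sqnorm p.
Proof. by rewrite !sqnormE dotrNl dotrNr opprK. Qed.

Lemma gradL_Gop (R : realType) n m (L : 'rV[R]_n -> 'rV[R]_m -> R) z :
  sqnormz (gradL L z) = dotz (Gop L z) (Gop L z).
Proof. by rewrite -sqnormzE /sqnormz /gradL /Gop /= sqnormN. Qed.

Lemma lip_sq {R : realType} {n m} {Rc : R} {L : 'rV[R]_n -> 'rV[R]_m -> R} :
  0 < Rc -> smooth_R Rc L -> forall p q,
  dotz (Gop L p - Gop L q) (Gop L p - Gop L q) <= Rc ^+ 2 * dotz (p - q) (p - q).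
Proof.
move=> R0 [_ lip] p q; have := lip p q; rewrite !sqnormzE => H.
have e1 := sqr_sqrtr (dotz_ge0 (Gop L p - Gop L q)).
have e2 := sqr_sqrtr (dotz_ge0 (p - q)).
rewrite -e1 -e2 -exprMn; apply: lerXn2r => //; rewrite nnegrE ?sqrtr_ge0 //.
by apply: mulr_ge0; [exact: ltW | exact: sqrtr_ge0].
Qed.

Theorem corollary2 (R : realType) (n m : nat) (Rc : R)
  (L : 'rV[R]_n -> 'rV[R]_m -> R) (xs : 'rV[R]_n) (ys : 'rV[R]_m)
  (z0 : 'rV[R]_n * 'rV[R]_m) :
  0 < Rc -> smooth_R Rc L -> convex_concave L -> saddle_point L xs ys ->
  forall k : nat,
    sqnormz (gradL L (iter_z L Rc z0 k)) <=
      27%:R * Rc ^+ 2 * sqnormz (z0 - (xs, ys)) / (k.+1%:R * k.+2%:R).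
Proof.
move=> R0 sm conv sad k.
have [diffF _] := sm.
have lip2 := lip_sq R0 sm.
pose z := iter_z L Rc z0.
pose a := alpha Rc.
pose V j := a j * (j.+1)%:R * (j.+2)%:R / 2 * dotz (Gop L (z j)) (Gop L (z j)) +
   (j.+1)%:R * dotz (Gop L (z j)) (z j - z0).
have bnd := bseq_bounds Rc R0.
have apos : forall j, 0 < a j.
  move=> j; have := bnd j; rewrite /bseq => /andP [h _].
  have hp : 0 < alpha Rc j * Rc by apply: lt_le_trans h; lra.
  by rewrite -(pmulr_lgt0 _ R0).
have aR1 : forall j, a j * Rc < 1.
  by move=> j; have := bnd j; rewrite /bseq => /andP [_ h]; apply: le_lt_trans h _; lra.
have step : forall j, V j.+1 <= V j.
  move=> j.
  apply: (@step_core R n m Rc (a j) (a j.+1) ((j.+2)%:R^-1) (j.+1)%:R (j.+2)%:R (j.+3)%:R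
     (z j) z0 (half_step L Rc z0 (z j) j) (z j.+1) (Gop L (z j))
     (Gop L (half_step L Rc z0 (z j) j)) (Gop L (z j.+1))).
  - exact: apos.
  - exact: R0.
  - exact: aR1.
  - by rewrite ler1n.
  - by rewrite natr1.
  - by rewrite -natrD addn2.
  - by [].
  - by [].
  - by [].
  - by [].
  - exact: (mono L diffF conv).
  - exact: lip2.
have Vk : forall j, V j <= V 0.
  elim=> [|j IH]; first exact: lexx.
  exact: le_trans (step j) IH.
have Gs : forall v, dotz (Gop L (xs, ys)) v = 0 by move=> v; exact: (Gstar L diffF xs ys sad).
have Gs' : forall v, dotz v (Gop L (xs, ys)) = 0 by move=> v; rewrite dotzC Gs.
have e2 : (k.+2)%:R = (k.+1)%:R + 1 :> R by rewrite natr1.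
rewrite gradL_Gop sqnormzE e2.
set zs : ('rV[R]_n * 'rV[R]_m)%type := (xs, ys).
set DD := dotz (z0 - zs) (z0 - zs).
have V0 : V 0 <= 618%:R / 1000%:R * Rc * DD.
  have ez : z 0 = z0 by [].
  rewrite /V ez subrr dotz0r mulr0.
  have h := lip2 z0 zs; rewrite -/DD in h.
  rewrite !(dotzDl, dotzDr, dotzNl, dotzNr) !Gs ?Gs' in h.
  have h' : dotz (Gop L z0) (Gop L z0) <= Rc ^+ 2 * DD by lra.
  have ea : a 0 * 0.+1%:R * 0.+2%:R / 2 = 618%:R / 1000%:R / Rc :> R.
    have -> : a 0 = 618%:R / 1000%:R / Rc by [].
    by field; rewrite gt_eqF.
  rewrite ea.
  have hh : 618%:R / 1000%:R / Rc * dotz (Gop L z0) (Gop L z0) <= 618%:R / 1000%:R / Rc * (Rc ^+ 2 * DD).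
    by apply: ler_wpM2l; [apply: divr_ge0; [lra | exact: ltW] | exact: h'].
  have ee : 618%:R / 1000%:R / Rc * (Rc ^+ 2 * DD) = 618%:R / 1000%:R * Rc * DD :> R.
    by field; rewrite gt_eqF.
  rewrite ee in hh. move: hh; move: (618%:R / 1000%:R / Rc * dotz (Gop L z0) (Gop L z0)) => q hh.
  lra.
set u := Gop L (z k).
have hmono : 0 <= dotz u (z k - zs).
  have := mono L diffF conv (z k) zs.
  by rewrite dotzDl dotzNl Gs oppr0 addr0.
pose e := zs - z0.
have split_e : z k - z0 = (z k - zs) + e by rewrite /e addrA subrK.
have eDD : dotz e e = DD by rewrite /e /DD -opprB dotzNl dotzNr opprK.
clearbody e.
have HY := dotz_ge0 ((a k * (k.+1)%:R * ((k.+1)%:R + 1) / 2) *: u + (k.+1)%:R *: e).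
rewrite !(dotzDl, dotzDr, dotzZl, dotzZr) (dotzC e u) eDD in HY.
have HV : a k * (k.+1)%:R * ((k.+1)%:R + 1) / 2 * dotz u u + (k.+1)%:R * dotz u e
   <= 618%:R / 1000%:R * Rc * DD.
  apply: le_trans V0; apply: le_trans (Vk k).
  rewrite /V -/u e2 split_e dotzDr lerD2l; apply: ler_wpM2l; first exact: ler0n.
  by rewrite lerDr.
have hb : 217%:R / 500%:R <= a k * Rc by have := bnd k; rewrite /bseq => /andP [].
apply: (@final_real R (a k) Rc (k.+1)%:R (dotz u u) (dotz u e) DD R0 (apos k) hb _ _ HV).
- by rewrite ler1n.
- exact: dotz_ge0.
- move: HY; set A := a k * _ * _ / 2; move=> HY. lra.
Qed.
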